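(* Let $a,b,m>0$ be real numbers. Suppose $p,q$ are increasing functions on the positive integers with \[\frac{p(n)}{n^m}\to a\quad\text{and}\quad\frac{q(n)}{n^m}\to b.\] Let $h_n:=\frac{1}{p(n)}$ and $k_n:=\frac{1}{q(n)}$. Let $f$ be a real valued function defined on $D=\{0,h_1,-k_1,h_2,-k_2,\ldots\}$ and let $R,L$ be real numbers. If $f(0)=0$ and \[\frac{f(h_n)}{h_n}\to R\quad\text{and}\quad\frac{f(-k_n)}{-k_n}\to L,\] then every real number between $L$ and $R$ is a sequential cord derivative of $f$ at $0$.
   Context: $L'\in\overline{\mathbb{R}}=\mathbb{R}\cup\{\pm\infty\}$ is a sequential cord derivative of $f$ at $0$ if there are sequences $h'_n>0$, $k'_n>0$ with $h'_n\to0$, $k'_n\to0$, $h'_n\in D$, $-k'_n\in D$ for all $n$, and $\frac{f(h'_n)-f(-k'_n)}{h'_n+k'_n}\to L'$. *)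

(* Defs.v *)
From Stdlib Require Import Reals.
From Coquelicot Require Import Coquelicot.
Open Scope R_scope.

Definition seq_cord_derivative (D : R -> Prop) (f : R -> R) (L' : Rbar) : Prop :=
  exists h k : nat -> R,
    (forall n, 0 < h n /\ 0 < k n /\ D (h n) /\ D (- k n)) /\
    is_lim_seq h 0 /\ is_lim_seq k 0 /\
    is_lim_seq (fun n => (f (h n) - f (- k n)) / (h n + k n)) L'.

Definition cord_domain (p q : nat -> R) (x : R) : Prop :=
  x = 0 \/ (exists n, (1 <= n)%nat /\ x = / p n)
        \/ (exists n, (1 <= n)%nat /\ x = - / q n).

(* Main.v *)
Require Import Defs.
From Stdlib Require Import Reals Lra Lia Psatz ClassicalEpsilon.
From Coquelicot Require Import Coquelicot.
Open Scope R_scope.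

Lemma Rpower_pos' x y : 0 < Rpower x y.
Proof. unfold Rpower; apply exp_pos. Qed.

Lemma P_infty m : 0 < m -> is_lim_seq (fun n => Rpower (INR n) m) p_infty.
Proof.
  intros Hm. apply is_lim_seq_spec. intros M.
  set (y := Rmax M 1). assert (Hy : 0 < y) by (unfold y; apply Rlt_le_trans with 1; [lra| apply Rmax_r]).
  set (X := Rpower y (/ m)).
  destruct (proj2 (is_lim_seq_spec _ _) is_lim_seq_INR X) as [N HN].
  exists N. intros n Hn. specialize (HN n Hn).
  apply Rle_lt_trans with y. apply Rmax_l.
   replace y with (Rpower X m) at 1.
   - apply Rlt_Rpower_l; auto. split; auto. apply Rpower_pos'.
   - unfold X. rewrite Rpower_mult. rewrite Rinv_l by lra. apply Rpower_1; auto.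
Qed.

Lemma grow p a m : 0 < a -> 0 < m -> is_lim_seq (fun n => p n / Rpower (INR n) m) a ->
  is_lim_seq p p_infty.
Proof.
  intros Ha Hm H.
  apply is_lim_seq_ext with (fun n => (p n / Rpower (INR n) m) * Rpower (INR n) m).
  { intros n. field. apply Rgt_not_eq, Rpower_pos'. }
  eapply is_lim_seq_mult. exact H. apply P_infty; auto.
  simpl. unfold is_Rbar_mult, Rbar_mult'. destruct (Rle_dec 0 a); try lra.
  destruct (Rle_lt_or_eq_dec 0 a r); try lra. reflexivity.
Qed.

Lemma grow_ev p : is_lim_seq p p_infty -> forall M, exists N, forall n, (N <= n)%nat -> M <= p n.
Proof. intros H M. destruct (proj2 (is_lim_seq_spec _ _) H M) as [N HN]. exists N; intros; left; auto. Qed.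

Lemma inv_lim p : is_lim_seq p p_infty -> is_lim_seq (fun n => / p n) 0.
Proof. intros H. apply (is_lim_seq_inv _ _ H). discriminate. Qed.

Lemma ratio_lim (q : nat -> R) b m : 0 < b -> (forall n, (1 <= n)%nat -> 0 < q n) ->
  is_lim_seq (fun n => q n / Rpower (INR n) m) b -> is_lim_seq (fun n => q (S n) / q n) 1.
Proof.
  intros Hb Hq H.
  apply is_lim_seq_incr_1.
  assert (H0 := proj1 (is_lim_seq_incr_1 _ _) H).
  assert (H1 := proj1 (is_lim_seq_incr_1 _ _) H0).
  assert (H2 : is_lim_seq (fun n => Rpower (1 + / INR (S n)) m) 1).
  { assert (R1 : Rpower 1 m = 1) by (unfold Rpower; rewrite ln_1, Rmult_0_r; apply exp_0).
    cut (is_lim_seq (fun n => Rpower (1 + / INR (S n)) m) (Rpower 1 m)).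
    { rewrite R1; auto. }
    apply (is_lim_seq_continuous (fun x => Rpower x m)).
    - apply derivable_continuous_pt. eexists. apply derivable_pt_lim_power. lra.
    - cut (is_lim_seq (fun n => 1 + / INR (S n)) (1 + 0)). { rewrite Rplus_0_r; auto. }
      apply is_lim_seq_plus'. apply is_lim_seq_const.
      assert (K := inv_lim _ is_lim_seq_INR). apply (is_lim_seq_incr_1 _ _) in K. exact K. }
  assert (H3 := is_lim_seq_mult' _ _ _ _ (is_lim_seq_div' _ _ _ _ H1 H0 (Rgt_not_eq _ _ Hb)) H2).
  replace 1 with (b / b * 1) by (field; lra).
  eapply is_lim_seq_ext; [|exact H3]. intros n. cbv beta.
  assert (Hn1 : 0 < q (S n)) by (apply Hq; lia).
  assert (Hn2 : 0 < q (S (S n))) by (apply Hq; lia).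
  assert (HI : 0 < INR (S n)) by (apply lt_0_INR; lia).
  assert (E : Rpower (1 + / INR (S n)) m = Rpower (INR (S (S n))) m / Rpower (INR (S n)) m).
  { assert (E2 : INR (S (S n)) = INR (S n) * (1 + / INR (S n))).
    { rewrite (S_INR (S n)). field. lra. }
    rewrite E2, <- Rpower_mult_distr; auto. field. apply Rgt_not_eq, Rpower_pos'.
    apply Rplus_lt_0_compat. lra. apply Rinv_0_lt_compat; auto. }
  rewrite E.
  assert (P1 := Rpower_pos' (INR (S n)) m). assert (P2 := Rpower_pos' (INR (S (S n))) m).
  field. repeat split; lra.
Qed.

Lemma discrete (g : nat -> R) J lam d : g J < lam ->
  (forall j, (J <= j)%nat -> g (S j) - g j <= d) ->
  forall k, lam <= g (J + k)%nat -> exists j, (J <= j)%nat /\ Rabs (g j - lam) <= d.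
Proof.
  intros HJ Hs k. induction k as [|k IH]; intros Hk.
  - rewrite Nat.add_0_r in Hk. lra.
  - destruct (Rle_lt_dec lam (g (J + k)%nat)) as [h|h]. { apply IH; auto. }
    exists (J + S k)%nat. split. lia.
    rewrite Nat.add_succ_r in *. specialize (Hs (J + k)%nat ltac:(lia)).
    apply Rabs_le. lra.
Qed.

Lemma key (p q : nat -> R) :
  (forall n, (1 <= n)%nat -> 0 < p n) -> (forall n, (1 <= n)%nat -> 0 < q n) ->
  (forall M, exists N, forall n, (N <= n)%nat -> M <= p n) ->
  (forall M, exists N, forall n, (N <= n)%nat -> M <= q n) ->
  (forall d, 0 < d -> exists J, forall j, (J <= j)%nat -> q (S j) <= (1 + d) * q j) ->
  forall lam, 0 <= lam <= 1 -> forall eps, 0 < eps -> forall N,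
  exists n j, (N <= n)%nat /\ (N <= j)%nat /\ Rabs (q j / (p n + q j) - lam) < eps.
Proof.
  intros Hp Hq Gp Gq Rq lam Hlam eps Heps N.
  set (d := Rmin (eps / 3) (1/4)).
  assert (Hd : 0 < d /\ d <= eps / 3 /\ d <= 1/4).
  { unfold d; split; [apply Rmin_case; lra|split; [apply Rmin_l|apply Rmin_r]]. }
  destruct (Rq d ltac:(lra)) as [J0 HJ0].
  set (J := Nat.max (Nat.max J0 N) 1).
  assert (HqJ : 0 < q J) by (apply Hq; unfold J; lia).
  destruct (Gp (q J / d)) as [N1 HN1].
  set (n := Nat.max (Nat.max N1 N) 1).
  assert (Hpn : 0 < p n) by (apply Hp; unfold n; lia).
  assert (HpnM : q J / d <= p n) by (apply HN1; unfold n; lia).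
  set (g := fun j => q j / (p n + q j)).
  assert (HgJ : 0 <= g J < d).
  { unfold g. split. apply Rmult_le_pos; [lra|left; apply Rinv_0_lt_compat; lra].
    apply Rmult_lt_reg_r with (p n + q J). lra. unfold Rdiv. rewrite Rmult_assoc, Rinv_l by lra.
    assert (q J <= d * p n). { apply Rmult_le_reg_r with (/ d). apply Rinv_0_lt_compat; lra.
      replace (d * p n * / d) with (p n) by (field; lra). exact HpnM. }
    nra. }
  destruct (Gq ((1 - d) * p n / d)) as [N2 HN2].
  set (j1 := Nat.max N2 J).
  assert (Hqj1 : (1 - d) * p n / d <= q j1) by (apply HN2; unfold j1; lia).
  assert (Hqj1p : 0 < q j1) by (apply Hq; unfold j1, J; lia).
  assert (Hgj1 : 1 - d <= g j1).
  { unfold g. apply Rmult_le_reg_r with (p n + q j1). lra. unfold Rdiv. rewrite Rmult_assoc, Rinv_l by lra.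
    assert ((1 - d) * p n <= d * q j1). { apply Rmult_le_reg_r with (/ d). apply Rinv_0_lt_compat; lra.
      replace (d * q j1 * / d) with (q j1) by (field; lra). exact Hqj1. }
    nra. }
  set (lam' := Rmin lam (1 - d)).
  assert (Hl' : lam' <= lam /\ lam' <= 1 - d /\ (lam' = lam \/ lam' = 1 - d)).
  { unfold lam'; split; [apply Rmin_l|split;[apply Rmin_r|]]. apply Rmin_case; auto. }
  destruct (Rle_lt_dec lam' (g J)) as [hc|hc].
  - exists n, J. split. unfold n; lia. split. unfold J; lia.
    fold (g J). apply Rabs_def1; lra.
  - assert (Hs : forall j, (J <= j)%nat -> g (S j) - g j <= d).
    { intros j Hj. assert (Hj0 : (J0 <= j)%nat) by (unfold J in Hj; lia).
      specialize (HJ0 j Hj0).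
      assert (Q1 : 0 < q j) by (apply Hq; unfold J in Hj; lia).
      assert (Q2 : 0 < q (S j)) by (apply Hq; lia).
      unfold g.
      replace (q (S j) / (p n + q (S j)) - q j / (p n + q j)) with
        (p n * (q (S j) - q j) / ((p n + q (S j)) * (p n + q j))) by (field; lra).
      apply Rmult_le_reg_r with ((p n + q (S j)) * (p n + q j)). nra.
      unfold Rdiv. rewrite Rmult_assoc, Rinv_l by nra. rewrite Rmult_1_r.
      assert (0 < (p n + q (S j)) * (p n + q j)) by nra.
      destruct (Rle_lt_dec (q (S j)) (q j)).
      + assert (p n * (q (S j) - q j) <= 0) by nra. nra.
      + assert (p n * (q (S j) - q j) <= p n * (d * q j)) by (apply Rmult_le_compat_l; lra).
        assert (p n * q j <= (p n + q (S j)) * (p n + q j)) by nra. nra. }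
    destruct (discrete g J lam' d hc Hs (j1 - J)%nat) as [j [Hj Hj2]].
    { replace (J + (j1 - J))%nat with j1 by (unfold j1; lia). lra. }
    exists n, j. split. unfold n; lia. split. unfold J in Hj; lia.
    fold (g j). apply Rabs_le_between in Hj2. apply Rabs_def1; lra.
Qed.
Lemma sub_ev (phi : nat -> nat) : (forall N, (N <= phi N)%nat) -> filterlim phi eventually eventually.
Proof.
  intros H P [N HN]. exists N. intros n Hn. apply HN. specialize (H n). lia.
Qed.

Theorem theorem4p5 (a b m : R) (p q : nat -> R) (f : R -> R) (Rr Ll : R) :
  0 < a -> 0 < b -> 0 < m ->
  (forall n, (1 <= n)%nat -> 0 < p n) ->
  (forall n, (1 <= n)%nat -> 0 < q n) ->
  (forall n, (1 <= n)%nat -> p n < p (S n)) ->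
  (forall n, (1 <= n)%nat -> q n < q (S n)) ->
  is_lim_seq (fun n => p n / Rpower (INR n) m) a ->
  is_lim_seq (fun n => q n / Rpower (INR n) m) b ->
  f 0 = 0 ->
  is_lim_seq (fun n => f (/ p n) / (/ p n)) Rr ->
  is_lim_seq (fun n => f (- / q n) / (- / q n)) Ll ->
  forall x : R, Rmin Ll Rr <= x <= Rmax Ll Rr ->
    seq_cord_derivative (cord_domain p q) f (Finite x).
Proof.
  intros Ha Hb Hm Hp Hq Ip Iq Lp Lq f0 LR LL x Hx.
  assert (Pinf := grow p a m Ha Hm Lp).
  assert (Qinf := grow q b m Hb Hm Lq).
  assert (Rq : forall d, 0 < d -> exists J, forall j, (J <= j)%nat -> q (S j) <= (1 + d) * q j).
  { intros d Hd. destruct (proj2 (is_lim_seq_spec _ _) (ratio_lim q b m Hb Hq Lq) (mkposreal d Hd)) as [J HJ].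
    exists (Nat.max J 1). intros j Hj. specialize (HJ j ltac:(lia)). simpl in HJ.
    assert (Q1 : 0 < q j) by (apply Hq; lia).
    apply Rabs_lt_between in HJ.
    assert (q (S j) / q j < 1 + d) by lra.
    apply Rmult_lt_compat_r with (r := q j) in H; auto. unfold Rdiv in H.
    rewrite Rmult_assoc, Rinv_l in H by lra. lra. }
  assert (Hlam : exists lam, 0 <= lam <= 1 /\ x = lam * Rr + (1 - lam) * Ll).
  { unfold Rmin, Rmax in Hx. destruct (Rle_dec Ll Rr) as [h|h].
    - destruct (Req_dec Ll Rr) as [e|e].
      + exists 1. split. lra. subst. lra.
      + exists ((x - Ll) / (Rr - Ll)).
        assert (E : (x - Ll) / (Rr - Ll) * (Rr - Ll) = x - Ll) by (field; lra).
        split. split; nra. nra.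
    - exists ((x - Ll) / (Rr - Ll)).
      assert (E : (x - Ll) / (Rr - Ll) * (Rr - Ll) = x - Ll) by (field; lra).
      split. split; nra. nra. }
  destruct Hlam as [lam [Hl Hxl]].
  assert (HF : forall N, exists pr : nat * nat, (S N <= fst pr)%nat /\ (S N <= snd pr)%nat /\
     Rabs (q (snd pr) / (p (fst pr) + q (snd pr)) - lam) < / INR (S N)).
  { intros N. destruct (key p q Hp Hq (grow_ev p Pinf) (grow_ev q Qinf) Rq lam Hl (/ INR (S N))
       ltac:(apply Rinv_0_lt_compat, lt_0_INR; lia) (S N)) as [n [j [H1 [H2 H3]]]].
    exists (n, j). simpl. auto. }
  set (F := fun N => proj1_sig (constructive_indefinite_description _ (HF N))).
  assert (FP : forall N, (S N <= fst (F N))%nat /\ (S N <= snd (F N))%nat /\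
     Rabs (q (snd (F N)) / (p (fst (F N)) + q (snd (F N))) - lam) < / INR (S N)).
  { intros N. exact (proj2_sig (constructive_indefinite_description _ (HF N))). }
  assert (E1 : filterlim (fun N => fst (F N)) eventually eventually).
  { apply sub_ev. intros N. destruct (FP N) as [h _]. lia. }
  assert (E2 : filterlim (fun N => snd (F N)) eventually eventually).
  { apply sub_ev. intros N. destruct (FP N) as [_ [h _]]. lia. }
  exists (fun N => / p (fst (F N))), (fun N => / q (snd (F N))).
  split; [|split; [|split]].
  - intros N. destruct (FP N) as [h1 [h2 _]].
    assert (0 < p (fst (F N))) by (apply Hp; lia).
    assert (0 < q (snd (F N))) by (apply Hq; lia).
    split; [apply Rinv_0_lt_compat; auto|split; [apply Rinv_0_lt_compat; auto|split]].
    + right; left. exists (fst (F N)). split; [lia|reflexivity].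
    + right; right. exists (snd (F N)). split; [lia|reflexivity].
  - exact (is_lim_seq_subseq _ _ _ E1 (inv_lim p Pinf)).
  - exact (is_lim_seq_subseq _ _ _ E2 (inv_lim q Qinf)).
  - assert (W : is_lim_seq (fun N => q (snd (F N)) / (p (fst (F N)) + q (snd (F N)))) lam).
    { apply is_lim_seq_le_le with (fun N => lam - / INR (S N)) (fun N => lam + / INR (S N)).
      - intros N. destruct (FP N) as [_ [_ h]]. apply Rabs_lt_between in h. lra.
      - assert (K := inv_lim _ is_lim_seq_INR). apply (is_lim_seq_incr_1 _ _) in K.
        cut (is_lim_seq (fun N => lam - / INR (S N)) (lam - 0)). { rewrite Rminus_0_r; auto. }
        apply is_lim_seq_minus'; auto. apply is_lim_seq_const.
      - assert (K := inv_lim _ is_lim_seq_INR). apply (is_lim_seq_incr_1 _ _) in K.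
        cut (is_lim_seq (fun N => lam + / INR (S N)) (lam + 0)). { rewrite Rplus_0_r; auto. }
        apply is_lim_seq_plus'; auto. apply is_lim_seq_const. }
    assert (A := is_lim_seq_subseq _ _ _ E1 LR).
    assert (B := is_lim_seq_subseq _ _ _ E2 LL).
    assert (W' : is_lim_seq (fun N => 1 - q (snd (F N)) / (p (fst (F N)) + q (snd (F N)))) (1 - lam)).
    { apply is_lim_seq_minus'; auto. apply is_lim_seq_const. }
    assert (T := is_lim_seq_plus' _ _ _ _ (is_lim_seq_mult' _ _ _ _ W A) (is_lim_seq_mult' _ _ _ _ W' B)).
    rewrite Hxl. eapply is_lim_seq_ext; [|exact T].
    intros N. cbv beta. destruct (FP N) as [h1 [h2 _]].
    assert (0 < p (fst (F N))) by (apply Hp; lia).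
    assert (0 < q (snd (F N))) by (apply Hq; lia).
    field. repeat split; try lra.
Qed.
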